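(* Consider (CVOP) and its associated convex projection (Pv). (1) Let (CVOP) be bounded. If $\bar X\subseteq\mathcal{X}$ is a Hausdorff-type finite $\epsilon$-infimizer of (CVOP), then $\bar S:=\{(x,\Gamma(x)):x\in\bar X\}$ is a finite $\epsilon$-solution of (Pv). (2) Let (Pv) be self-bounded with $(\operatorname{cl}Y_a)_\infty=\operatorname{cl}C$. If $\bar S\subseteq S_a$ is a finite $\epsilon$-solution of (Pv), then $\bar X:=\operatorname{proj}_x[\bar S]$ is a Hausdorff-type finite $\xi$-infimizer of (CVOP) for every $\xi>\epsilon$.
   Context: (CVOP): $\min\Gamma(x)$ w.r.t. $\le_C$ s.t. $x\in\mathcal{X}$, with $C\subseteq\mathbb{R}^m$ a non-trivial pointed solid convex cone, $\mathcal{X}\subseteq\mathbb{R}^n$ convex, $\Gamma$ $C$-convex; upper image $\mathcal{G}=\operatorname{cl}(\Gamma[\mathcal{X}]+C)$; bounded means $\mathcal{G}\subseteq\{q\}+C$ for some $q$. Fix a $p$-norm $\|\cdot\|$ with closed balls $B_\epsilon$. Hausdorff distance $d_H(A_1,A_2)=\max\{\sup_{a_1\in A_1}\inf_{a_2\in A_2}\|a_1-a_2\|,\sup_{a_2\in A_2}\inf_{a_1\in A_1}\|a_1-a_2\|\}$. A nonempty finite $\bar X\subseteq\mathcal{X}$ is a Hausdorff-type finite $\epsilon$-infimizer of bounded (CVOP) if $d_H(\mathcal{G},\operatorname{conv}\Gamma[\bar X]+C)\le\epsilon$. (Pv): compute $Y_a=\operatorname{proj}_y[S_a]$ with $S_a=\{(x,y):x\in\mathcal{X},y\in\Gamma(x)+C\}$.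 Recession cone $A_\infty=\{y:x+\lambda y\in A\ \forall x\in A,\lambda\ge0\}$. (Pv) is self-bounded if $Y_a\ne\mathbb{R}^m$ and $Y_a\subseteq\operatorname{conv}\{y^{(1)},\dots,y^{(k)}\}+(\operatorname{cl}Y_a)_\infty$ for finitely many points; a nonempty finite $\bar S\subseteq S_a$ is a finite $\epsilon$-solution of self-bounded (Pv) if $Y_a\subseteq\operatorname{conv}\operatorname{proj}_y[\bar S]+(\operatorname{cl}Y_a)_\infty+B_\epsilon$. $\operatorname{proj}_x(x,y)=x$. *)

(* Defs.v *)
From HB Require Import structures.
From mathcomp Require Import all_boot all_order all_algebra.
From mathcomp Require Import all_classical all_reals all_analysis.
Set Implicit Arguments. Unset Strict Implicit. Unset Printing Implicit Defensive.
Import Order.TTheory GRing.Theory Num.Theory.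
Import numFieldNormedType.Exports.
Local Open Scope classical_set_scope.
Local Open Scope ring_scope.

Section CVOP.
Variable R : realType.

Definition pnorm (p : \bar R) (k : nat) (x : 'rV[R]_k) : R :=
  match p with
  | EFin q => (\sum_(i < k) `|x 0 i| `^ q) `^ q^-1
  | _ => \big[Num.max/0]_(i < k) `|x 0 i|
  end.

Definition cball (p : \bar R) (k : nat) (eps : R) : set 'rV[R]_k :=
  [set y | pnorm p y <= eps].

Definition msum (k : nat) (A B : set 'rV[R]_k) : set 'rV[R]_k :=
  [set z | exists a b, A a /\ B b /\ z = a + b].

Definition conv (k : nat) (A : set 'rV[R]_k) : set 'rV[R]_k :=
  [set y | exists (N : nat) (w : 'I_N -> R) (v : 'I_N -> 'rV[R]_k),
      (forall i, 0 <= w i) /\ \sum_(i < N) w i = 1 /\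
      (forall i, A (v i)) /\ y = \sum_(i < N) w i *: v i].

Definition is_convex (k : nat) (A : set 'rV[R]_k) : Prop :=
  forall x y, A x -> A y -> forall l : R, 0 <= l <= 1 ->
    A (l *: x + (1 - l) *: y).

Definition convex_cone (k : nat) (C : set 'rV[R]_k) : Prop :=
  C !=set0 /\
  (forall x, C x -> forall l : R, 0 <= l -> C (l *: x)) /\
  (forall x y, C x -> C y -> C (x + y)).

Definition pointed (k : nat) (C : set 'rV[R]_k) : Prop :=
  forall x, C x -> C (- x) -> x = 0.

Definition solid (k : nat) (C : set 'rV[R]_k) : Prop := interior C !=set0.

Definition nontrivial (k : nat) (C : set 'rV[R]_k) : Prop :=
  C <> [set 0] /\ C <> setT.

Definition leC (k : nat) (C : set 'rV[R]_k) (x y : 'rV[R]_k) : Prop := C (y - x).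

Definition C_convex (n m : nat) (C : set 'rV[R]_m) (X : set 'rV[R]_n)
  (G : 'rV[R]_n -> 'rV[R]_m) : Prop :=
  forall x y, X x -> X y -> forall l : R, 0 <= l <= 1 ->
    leC C (G (l *: x + (1 - l) *: y)) (l *: G x + (1 - l) *: G y).

Definition upper_image (n m : nat) (C : set 'rV[R]_m) (X : set 'rV[R]_n)
  (G : 'rV[R]_n -> 'rV[R]_m) : set 'rV[R]_m :=
  closure (msum (G @` X) C).

Definition bounded_CVOP (n m : nat) (C : set 'rV[R]_m) (X : set 'rV[R]_n)
  (G : 'rV[R]_n -> 'rV[R]_m) : Prop :=
  exists q, upper_image C X G `<=` msum [set q] C.

Definition hausdorff (p : \bar R) (k : nat) (A1 A2 : set 'rV[R]_k) : \bar R :=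
  Order.max
    (ereal_sup [set ereal_inf [set (pnorm p (a1 - a2))%:E | a2 in A2] | a1 in A1])
    (ereal_sup [set ereal_inf [set (pnorm p (a1 - a2))%:E | a1 in A1] | a2 in A2]).

Definition hausdorff_infimizer (p : \bar R) (n m : nat) (C : set 'rV[R]_m)
  (X : set 'rV[R]_n) (G : 'rV[R]_n -> 'rV[R]_m) (eps : R)
  (Xb : set 'rV[R]_n) : Prop :=
  Xb !=set0 /\ finite_set Xb /\ Xb `<=` X /\
  (hausdorff p (upper_image C X G) (msum (conv (G @` Xb)) C) <= eps%:E)%E.

Definition Sa (n m : nat) (C : set 'rV[R]_m) (X : set 'rV[R]_n)
  (G : 'rV[R]_n -> 'rV[R]_m) : set ('rV[R]_n * 'rV[R]_m) :=
  [set s | X s.1 /\ msum [set G s.1] C s.2].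

Definition Ya (n m : nat) (C : set 'rV[R]_m) (X : set 'rV[R]_n)
  (G : 'rV[R]_n -> 'rV[R]_m) : set 'rV[R]_m := snd @` Sa C X G.

Definition rec_cone (k : nat) (A : set 'rV[R]_k) : set 'rV[R]_k :=
  [set y | forall x, A x -> forall l : R, 0 <= l -> A (x + l *: y)].

Definition self_bounded (n m : nat) (C : set 'rV[R]_m) (X : set 'rV[R]_n)
  (G : 'rV[R]_n -> 'rV[R]_m) : Prop :=
  Ya C X G <> setT /\
  exists P : set 'rV[R]_m, finite_set P /\
    Ya C X G `<=` msum (conv P) (rec_cone (closure (Ya C X G))).

Definition finite_eps_solution (p : \bar R) (n m : nat) (C : set 'rV[R]_m)
  (X : set 'rV[R]_n) (G : 'rV[R]_n -> 'rV[R]_m) (eps : R)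
  (Sb : set ('rV[R]_n * 'rV[R]_m)) : Prop :=
  Sb !=set0 /\ finite_set Sb /\ Sb `<=` Sa C X G /\
  Ya C X G `<=`
    msum (msum (conv (snd @` Sb)) (rec_cone (closure (Ya C X G)))) (@cball p m eps).

End CVOP.

(* Main.v *)
Require Import Defs.
From HB Require Import structures.
From mathcomp Require Import all_boot all_order all_algebra.
From mathcomp Require Import all_classical all_reals all_analysis.
From mathcomp Require Import ring lra.
Import Order.TTheory GRing.Theory Num.Theory.
Import numFieldNormedType.Exports.
Local Open Scope classical_set_scope.
Local Open Scope ring_scope.

Set Implicit Arguments. Unset Strict Implicit. Unset Printing Implicit Defensive.


Section Mink.
Variable R : realType.

Lemma powR_conv (q a b t : R) : 1 <= q -> 0 <= a -> 0 <= b -> 0 <= t -> t <= 1 ->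
  (t * a + (1 - t) * b) `^ q <= t * a `^ q + (1 - t) * b `^ q.
Proof.
move=> q1 a0 b0 t0 t1.
have := @convex_powR R q q1 (Itv01 t0 t1) a b.
rewrite !inE /= !in_itv /= !andbT => /(_ a0 b0).
by rewrite !convRE.
Qed.

Lemma powRVr (A q : R) : 0 < A -> (A^-1) `^ q = (A `^ q)^-1.
Proof.
move=> A0; rewrite -powR_inv1 ?ltW // -powRrM mulN1r powRN //.
Qed.

Lemma powRK (S q : R) : 0 < q -> 0 <= S -> (S `^ q^-1) `^ q = S.
Proof. by move=> q0 S0; rewrite -powRrM mulVf ?gt_eqF // powRr1. Qed.

Lemma powRK' (S q : R) : 0 < q -> 0 <= S -> (S `^ q) `^ q^-1 = S.
Proof. by move=> q0 S0; rewrite -powRrM mulfV ?gt_eqF // powRr1. Qed.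

Lemma mink (k : nat) (q : R) (a b : 'I_k -> R) : 1 <= q ->
  (forall i, 0 <= a i) -> (forall i, 0 <= b i) ->
  (\sum_i (a i + b i) `^ q) `^ q^-1 <=
  (\sum_i a i `^ q) `^ q^-1 + (\sum_i b i `^ q) `^ q^-1.
Proof.
move=> q1 a0 b0.
have q0 : 0 < q by rewrite (lt_le_trans _ q1).
have eq0 (c : 'I_k -> R) : (forall i, 0 <= c i) -> \sum_i c i `^ q = 0 ->
    forall i, c i = 0.
  move=> c0 /eqP; rewrite psumr_eq0; last by move=> i _; exact: powR_ge0.
  by move=> /allP H i; apply: (@powR_eq0_eq0 _ _ q); apply/eqP/H; rewrite mem_index_enum.
have SA0 : 0 <= \sum_i a i `^ q by rewrite sumr_ge0 // => i _; exact: powR_ge0.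
have SB0 : 0 <= \sum_i b i `^ q by rewrite sumr_ge0 // => i _; exact: powR_ge0.
have SAq := powRK q0 SA0; have SBq := powRK q0 SB0.
move: SAq SBq (eq0 _ a0) (eq0 _ b0).
move: SA0 SB0; move SAE : (\sum_i a i `^ q) => SA; move SBE : (\sum_i b i `^ q) => SB SA0 SB0.
have A0 : 0 <= SA `^ q^-1 by exact: powR_ge0.
have B0 : 0 <= SB `^ q^-1 by exact: powR_ge0.
move: (SA `^ q^-1) A0 => A A0; move: (SB `^ q^-1) B0 => B B0.
move=> SAq SBq ea eb.
have q0' : q != 0 by rewrite gt_eqF.
have [A00|Apos] := eqVneq A 0.
  have ai : forall i, a i = 0 by apply: ea; rewrite -SAq A00 powR0.
  rewrite A00 add0r.
  suff -> : \sum_i (a i + b i) `^ q = B `^ q by rewrite powRK'.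
  by rewrite SBq -SBE; apply: eq_bigr => i _; rewrite ai add0r.
have [B00|Bpos] := eqVneq B 0.
  have bi : forall i, b i = 0 by apply: eb; rewrite -SBq B00 powR0.
  rewrite B00 addr0.
  suff -> : \sum_i (a i + b i) `^ q = A `^ q by rewrite powRK'.
  by rewrite SAq -SAE; apply: eq_bigr => i _; rewrite bi addr0.
have Agt : 0 < A by rewrite lt_def Apos A0.
have Bgt : 0 < B by rewrite lt_def Bpos B0.
have s0 : 0 < A + B by rewrite addr_gt0.
move: s0; move sE : (A + B) => s s0.
have sn0 : s != 0 by rewrite gt_eqF.
have t0 : 0 <= A / s by rewrite divr_ge0 // ltW.
have t1 : A / s <= 1 by rewrite ler_pdivrMr // mul1r -sE lerDl.
have t1' : 1 - A / s = B / s.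
  by apply: (mulIf sn0); rewrite mulrBl !divfK // mul1r; lra.
move: t0 t1 t1'; move tE : (A / s) => t t0 t1 t1'.
suff H : \sum_i (a i + b i) `^ q <= s `^ q.
  rewrite -[leRHS](@powRK' s q) //; last exact: ltW.
  apply: ge0_ler_powR => //; rewrite ?invr_ge0 ?ltW // ?nnegrE ?powR_ge0 //.
  by rewrite sumr_ge0 // => i _; exact: powR_ge0.
have step i : (a i + b i) `^ q <=
    s `^ q * (t * (a i `^ q / A `^ q) + (1 - t) * (b i `^ q / B `^ q)).
  have -> : a i + b i = s * (t * (a i / A) + (1 - t) * (b i / B)).
    rewrite t1' -tE; field.
    by rewrite !gt_eqF.
  rewrite powRM; last 2 first.
  - exact: ltW.
  - apply: addr_ge0; apply: mulr_ge0 => //.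
    + exact: divr_ge0 (a0 i) (ltW Agt).
    + by rewrite subr_ge0.
    + exact: divr_ge0 (b0 i) (ltW Bgt).
  rewrite ler_pM2l ?powR_gt0 //.
  apply: le_trans (powR_conv q1 (divr_ge0 (a0 i) (ltW Agt)) (divr_ge0 (b0 i) (ltW Bgt)) t0 t1) _.
  rewrite (powRM _ (a0 i)); last by rewrite invr_ge0; exact: ltW.
  rewrite (powRM _ (b0 i)); last by rewrite invr_ge0; exact: ltW.
  by rewrite !powRVr.
apply: le_trans (ler_sum _ (fun i _ => step i)) _.
rewrite -mulr_sumr big_split /= -!mulr_sumr -!mulr_suml SAE SBE -SAq -SBq.
rewrite !mulfV ?gt_eqF ?powR_gt0 //.
have -> : t * 1 + (1 - t) * 1 = 1 by ring.
by rewrite mulr1.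
Qed.
End Mink.

Section PN.
Variable R : realType.
Variable p : \bar R.
Hypothesis hp : (1 <= p)%E.
Variable k : nat.
Implicit Types x y : 'rV[R]_k.

Lemma pn_ge0 x : 0 <= pnorm p x.
Proof.
case: p hp => [q| |] //= _; first exact: powR_ge0.
exact: bigmax_ge_id.
Qed.

Lemma pn_coord x i : `|x 0 i| <= pnorm p x.
Proof.
case: p hp => [q| |] //=; last first.
  by move=> _; apply: le_bigmax.
rewrite lee_fin => q1.
have q0 : 0 < q by rewrite (lt_le_trans _ q1).
have -> : `|x 0 i| = (`|x 0 i| `^ q) `^ q^-1.
  by rewrite -powRrM mulfV ?gt_eqF // powRr1.
apply: ge0_ler_powR.
- by rewrite invr_ge0 ltW.
- by rewrite nnegrE powR_ge0.
- by rewrite nnegrE sumr_ge0 // => j _; exact: powR_ge0.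
- by rewrite (bigD1 i) //= lerDl sumr_ge0 // => j _; exact: powR_ge0.
Qed.


Lemma pn_triangle x y : pnorm p (x + y) <= pnorm p x + pnorm p y.
Proof.
have cx := pn_coord x; have cy := pn_coord y.
move: cx cy; case: p hp => [q| |] //=; last first.
  move=> _ cx cy; apply: bigmax_le.
    by apply: addr_ge0; exact: bigmax_ge_id.
  move=> i _; rewrite mxE; apply: le_trans (ler_normD _ _) _.
  by apply: lerD; [exact: cx|exact: cy].
rewrite lee_fin => q1 _ _.
have q0 : 0 < q by rewrite (lt_le_trans _ q1).
apply: le_trans (mink q1 (fun i => normr_ge0 (x 0 i)) (fun i => normr_ge0 (y 0 i))).
apply: ge0_ler_powR.
- by rewrite invr_ge0; exact: ltW.
- by rewrite nnegrE; apply: sumr_ge0 => i _; exact: powR_ge0.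
- by rewrite nnegrE; apply: sumr_ge0 => i _; exact: powR_ge0.
apply: ler_sum => i _; rewrite mxE.
apply: ge0_ler_powR; rewrite ?nnegrE ?normr_ge0 ?addr_ge0 //; first exact: ltW.
exact: ler_normD.
Qed.

Lemma pn_opp x : pnorm p (- x) = pnorm p x.
Proof.
case: p => [q| |] /=.
- by congr (_ `^ _); apply: eq_bigr => i _; rewrite mxE normrN.
- by apply: eq_bigr => i _; rewrite mxE normrN.
- by apply: eq_bigr => i _; rewrite mxE normrN.
Qed.

Lemma pn_bound x (M : R) : 0 <= M -> (forall i, `|x 0 i| <= M) ->
  pnorm p x <= k%:R * M.
Proof.
move=> M0 HM; case: p hp => [q| |] //=; last first.
  move=> _; case: k x HM => [|k'] x HM.
    by rewrite big_ord0 mul0r.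
  apply: bigmax_le; first by rewrite mulr_ge0.
  move=> i _; apply: le_trans (HM i) _.
  by rewrite ler_peMl // ler1n.
rewrite lee_fin => q1.
have q0 : 0 < q by rewrite (lt_le_trans _ q1).
apply: (@le_trans _ _ ((k%:R * M `^ q) `^ q^-1)).
  apply: ge0_ler_powR.
  - by rewrite invr_ge0; exact: ltW.
  - by rewrite nnegrE; apply: sumr_ge0 => i _; exact: powR_ge0.
  - by rewrite nnegrE mulr_ge0 // powR_ge0.
  have -> : k%:R * M `^ q = \sum_(i < k) M `^ q by rewrite sumr_const card_ord mulr_natl.
  apply: ler_sum => i _.
  apply: ge0_ler_powR; rewrite ?nnegrE ?normr_ge0 //; exact: ltW.
rewrite powRM ?ler0n ?powR_ge0 // powRK' //.
apply: ler_wpM2r => //.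
case: k => [|k']; first by rewrite powR0 ?invr_eq0 ?gt_eqF.
apply: ler1_powR; first by rewrite ler1n.
by rewrite invf_le1.
Qed.

Lemma coord_le_norm x i : `|x 0 i| <= `|x|.
Proof.
rewrite [leRHS]/Num.Def.normr /= mx_normrE.
by apply: le_trans (le_bigmax _ _ (0, i)) => /=.
Qed.

Lemma pn_le_norm x : pnorm p x <= k%:R * `|x|.
Proof. apply: pn_bound => //; exact: coord_le_norm. Qed.

Lemma norm_le_pn x : `|x| <= pnorm p x.
Proof.
rewrite [leLHS]/Num.Def.normr /= mx_normrE.
apply: bigmax_le; first exact: pn_ge0.
by move=> [i j] _ /=; rewrite (ord1 i); exact: pn_coord.
Qed.

Lemma pn0 : pnorm p (0 : 'rV[R]_k) = 0.
Proof.
apply/eqP; rewrite eq_le pn_ge0 andbT.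
apply: le_trans (pn_bound (M := 0) (lexx _) _) _.
  by move=> i; rewrite mxE normr0.
by rewrite mulr0.
Qed.

Lemma pn_sub_le x y : pnorm p x - pnorm p y <= pnorm p (x - y).
Proof.
rewrite lerBlDr; apply: le_trans (pn_triangle _ _).
by rewrite subrK.
Qed.

Lemma pn_distC x y : pnorm p (x - y) = pnorm p (y - x).
Proof. by rewrite -pn_opp opprB. Qed.

End PN.


Section Topo.
Variable R : realType.
Variable k : nat.
Implicit Types (A : set 'rV[R]_k) (x y z : 'rV[R]_k).

Lemma ballE x e y : ball x e y <-> `|x - y| < e.
Proof. by rewrite -ball_normE. Qed.

Lemma closureP A z : closure A z <-> forall e, 0 < e -> exists a, A a /\ `|z - a| < e.
Proof.
split.
  move=> cl e e0; have /cl [a [Aa]] := nbhsx_ballx z _ e0.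
  by move=> /ballE h; exists a.
move=> H B /nbhs_ballP [e /= e0 Be].
have [a [Aa ha]] := H e e0; exists a; split => //.
by apply: Be; apply/ballE.
Qed.

Lemma interiorP A x : interior A x -> exists2 e, 0 < e & forall y, `|x - y| < e -> A y.
Proof.
move=> /nbhs_ballP [e /= e0 Be]; exists e => // y h.
by apply: Be; apply/ballE.
Qed.

Lemma lip_cont (f : 'rV[R]_k -> R) (K : R) :
  (forall x y, f x - f y <= K * `|x - y|) -> continuous f.
Proof.
move=> H x; apply/(@cvgrPdist_lt _ _ _ (nbhs x) (nbhs_filter x)) => e e0.
have K1 : 0 < `|K| + 1 by rewrite ltr_wpDl.
have d0 : 0 < e / (`|K| + 1) by rewrite divr_gt0.
near=> t.
have ht : `|x - t| < e / (`|K| + 1).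
  by apply/ballE; near: t; first [exact: (nbhsx_ballx x _ d0) | exact: (near_ball x d0) | apply: nbhsx_ballx].

have bnd u v : `|u - v| < e / (`|K| + 1) -> f u - f v < e.
  move=> huv; apply: le_lt_trans (H u v) _.
  apply: le_lt_trans (ler_wpM2r (normr_ge0 _) (ler_norm K)) _.
  apply: le_lt_trans (ler_wpM2r (normr_ge0 _) (ler_wpDr ler01 (lexx `|K|))) _.
  by rewrite mulrC -ltr_pdivlMr.
rewrite ltr_norml; apply/andP; split.
  by rewrite ltrNl opprB; apply: bnd; rewrite distrC.
exact: bnd.
Unshelve. all: by end_near.
Qed.

Lemma closed_sub_le (f : 'rV[R]_k -> R) (c : R) : continuous f ->
  closed [set x | f x <= c].
Proof.
move=> cf; have := (continuous_closedP f).1 cf _ (@closed_le _ c).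
by [].
Qed.

Lemma closed_sub_ge (f : 'rV[R]_k -> R) (c : R) : continuous f ->
  closed [set x | c <= f x].
Proof.
move=> cf; have := (continuous_closedP f).1 cf _ (@closed_ge _ c).
by [].
Qed.

End Topo.


Section Gen.
Variable R : realType.
Variable k : nat.
Implicit Types (A B : set 'rV[R]_k).

Lemma conv_mono A B : A `<=` B -> Defs.conv A `<=` Defs.conv B.
Proof.
move=> AB y [N [w [v [w0 [w1 [Av ->]]]]]].
by exists N, w, v; split => //; split => //; split => // i; apply: AB.
Qed.

Lemma conv_sub A : is_convex A -> Defs.conv A `<=` A.
Proof.
move=> cA y [N]; elim: N y => [|N IH] y [w [v [w0 [w1 [Av ->]]]]].
  by move: w1; rewrite big_ord0 => /eqP; rewrite eq_sym oner_eq0.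
rewrite big_ord_recr /=; rewrite big_ord_recr /= in w1.
set l := \sum_(i < N) w (widen_ord (leqnSn N) i).
have l0 : 0 <= l by apply: sumr_ge0.
have wN : w ord_max = 1 - l by rewrite /l -w1; ring.
have [l00|lpos] := eqVneq l 0.
  have wi i : w (widen_ord (leqnSn N) i) = 0.
    apply/eqP; move: l00 => /eqP; rewrite psumr_eq0 // => /allP/(_ i).
    by rewrite mem_index_enum => /(_ isT).
  rewrite big1 ?add0r; last by move=> i _; rewrite wi scale0r.
  by rewrite wN l00 subr0 scale1r.
have lgt : 0 < l by rewrite lt_def lpos l0.
have -> : \sum_(i < N) w (widen_ord (leqnSn N) i) *: v (widen_ord (leqnSn N) i) =
    l *: \sum_(i < N) (w (widen_ord (leqnSn N) i) / l) *: v (widen_ord (leqnSn N) i).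
  rewrite scaler_sumr; apply: eq_bigr => i _; rewrite scalerA.
  by rewrite mulrCA mulfV ?mulr1.
rewrite wN; apply: cA.
- apply: IH; exists (fun i => w (widen_ord (leqnSn N) i) / l).
  exists (fun i => v (widen_ord (leqnSn N) i)); split.
    by move=> i; apply: divr_ge0.
  split => //.
  by rewrite -mulr_suml mulfV.
- exact: Av.
- by rewrite l0 /= -w1 lerDl.
Qed.

Lemma sum_pick N (c : R) (idx : 'I_N) (f : 'I_N -> 'rV[R]_k) :
  \sum_(j < N) (if idx == j then c else 0) *: f j = c *: f idx.
Proof.
rewrite (bigD1 idx) //= eqxx big1 ?addr0 // => j /negbTE.
by rewrite eq_sym => ->; rewrite scale0r.
Qed.

Lemma sum_pick1 N (c : R) (idx : 'I_N) :
  \sum_(j < N) (if idx == j then c else 0) = c.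
Proof.
rewrite (bigD1 idx) //= eqxx big1 ?addr0 // => j /negbTE.
by rewrite eq_sym => ->.
Qed.

Lemma fin_enum (P : set 'rV[R]_k) : finite_set P ->
  exists N (v : 'I_N -> 'rV[R]_k), (forall i, P (v i)) /\
    forall a, Defs.conv P a -> exists w : 'rV[R]_N,
      (forall i, 0 <= w 0 i) /\ \sum_i w 0 i = 1 /\ a = \sum_i w 0 i *: v i.
Proof.
move=> /finite_seqP [s ->].
exists (size s), (fun i => nth 0 s i); split.
  by move=> i /=; apply: mem_nth.
move=> a [N' [w [u [w0 [w1 [Au ->]]]]]].
have hidx i : (index (u i) s < size s)%N by rewrite index_mem; exact: Au.
pose io i := Ordinal (hidx i).
exists (\row_j \sum_(i < N') (if io i == j then w i else 0)); split.
  by move=> j; rewrite mxE; apply: sumr_ge0 => i _; case: ifP.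
split.
  under eq_bigr do rewrite mxE.
  rewrite exchange_big /= -w1; apply: eq_bigr => i _.
  exact: sum_pick1.
under [RHS]eq_bigr do rewrite mxE scaler_suml.
rewrite exchange_big /=; apply: eq_bigr => i _.
rewrite sum_pick /= nth_index //; exact: Au.
Qed.

Lemma bounded_by (A : set 'rV[R]_k) (M : R) : (forall x, A x -> `|x| <= M) ->
  bounded_set A.
Proof.
move=> H; suff : \forall M0 \near +oo, globally A [set x | `|x| <= M0] by [].
near=> M'.
move=> x Ax /=; apply: le_trans (H x Ax) _.
near: M'; apply: nbhs_pinfty_ge; exact: num_real.
Unshelve. all: by end_near.
Qed.

End Gen.


Lemma zsub3 (V : zmodType) (a b b' c : V) : a - b - c = (a - b' - c) + (b' - b).
Proof. by rewrite [RHS]addrAC addrA subrK. Qed.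

Lemma zsub2 (V : zmodType) (v r r' : V) : (v - r) - (v - r') = r' - r.
Proof. by rewrite opprB addrC addrA subrK. Qed.

Lemma zsubD (V : zmodType) (y a c : V) : y - (a + c) = y - a - c.
Proof. by rewrite opprD addrA. Qed.

Lemma norm_le_coord (R : realType) k (x : 'rV[R]_k) (M : R) : 0 <= M ->
  (forall i, `|x 0 i| <= M) -> `|x| <= M.
Proof.
move=> M0 H; rewrite [leLHS]/Num.Def.normr /= mx_normrE.
apply: bigmax_le => // -[i j] _ /=; rewrite (ord1 i); exact: H.
Qed.

Section Attain.
Variables (R : realType) (m : nat) (p : \bar R).
Hypothesis hp : (1 <= p)%E.
Variable C : set 'rV[R]_m.
Hypothesis C0 : C !=set0.

Lemma attain (P : set 'rV[R]_m) (eps : R) (y : 'rV[R]_m) :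
  finite_set P ->
  (forall d, 0 < d -> exists a c, Defs.conv P a /\ C c /\ pnorm p (y - (a + c)) < eps + d) ->
  exists a r, Defs.conv P a /\ closure C r /\ pnorm p (y - (a + r)) <= eps.
Proof.
move=> /fin_enum [N [v [Pv enumP]]] H.
pose L (w : 'rV[R]_N) := \sum_i w 0 i *: v i.
pose S w := [set pnorm p (y - L w - c) | c in C].
pose F w := inf (S w).
have S0 w : S w !=set0 by case: C0 => c Cc; exists (pnorm p (y - L w - c)), c.
have Slb w : lbound (S w) 0 by move=> _ [c _ <-]; exact: pn_ge0.
have hlb w : has_lbound (S w) by exists 0; exact: Slb.
have hinf w : has_inf (S w) by split; [exact: S0 | exact: hlb].
have Fle w c : C c -> F w <= pnorm p (y - L w - c).
  by move=> Cc; apply: (ge_inf (hlb w)); exists c.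
have Fge w z : (forall c, C c -> z <= pnorm p (y - L w - c)) -> z <= F w.
  by move=> Hz; apply: lb_le_inf (S0 w) _ => _ [c Cc <-]; exact: Hz.
pose KL := m%:R * \sum_i `|v i|.
have KL0 : 0 <= KL by rewrite mulr_ge0 // sumr_ge0.
have Llip w w' : pnorm p (L w' - L w) <= KL * `|w - w'|.
  apply: le_trans (pn_le_norm hp _) _; rewrite /KL -mulrA.
  apply: ler_wpM2l => //.
  have -> : L w' - L w = \sum_i (w' 0 i - w 0 i) *: v i.
    by rewrite /L -sumrB; apply: eq_bigr => i _; rewrite scalerBl.
  apply: le_trans (ler_norm_sum _ _ _) _.
  rewrite mulr_suml; apply: ler_sum => i _.
  rewrite normrZ mulrC; apply: ler_wpM2l => //.
  have := coord_le_norm (w' - w) i; rewrite mxE [X in _ <= X -> _]distrC.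
  by rewrite !mxE.
have Flip w w' : F w - F w' <= KL * `|w - w'|.
  rewrite lerBlDr addrC -lerBlDr; apply: Fge => c Cc.
  rewrite lerBlDr; apply: le_trans (Fle w c Cc) _.
  rewrite (zsub3 _ _ (L w')); apply: le_trans (pn_triangle hp _ _) _.
  by rewrite lerD2l.
have Fcont : continuous F by apply: (lip_cont (K := KL)).
pose D := [set w : 'rV[R]_N | (forall i, 0 <= w 0 i) /\ \sum_i w 0 i = 1].
have Dcl : closed D.
  have -> : D = (\bigcap_(i in setT) [set w : 'rV[R]_N | 0 <= w 0 i]) `&`
      ([set w | \sum_i w 0 i <= 1] `&` [set w | 1 <= \sum_i w 0 i]).
    apply/seteqP; split => w /=.
      by move=> [w0 w1]; split; [move=> i _; exact: w0 | rewrite w1 lexx].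
    by move=> [w0 [w1 w2]]; split; [move=> i; exact: w0 | apply/eqP; rewrite eq_le w1 w2].
  have cc i : continuous (fun w : 'rV[R]_N => w 0 i).
    apply: (lip_cont (K := 1)) => x x'; rewrite mul1r.
    apply: le_trans (ler_norm _) _; have := coord_le_norm (x - x') i.
    by rewrite !mxE.
  have cs : continuous (fun w : 'rV[R]_N => \sum_i w 0 i).
    apply: (lip_cont (K := N%:R)) => x x'.
    rewrite -sumrB; apply: le_trans (ler_norm _) _.
    apply: le_trans (ler_norm_sum _ _ _) _.
    have -> : N%:R * `|x - x'| = \sum_(i < N) `|x - x'| by rewrite sumr_const card_ord mulr_natl.
    apply: ler_sum => i _; have := coord_le_norm (x - x') i.
    by rewrite !mxE.
  apply: closedI; first by apply: closed_bigI => i _; exact: closed_sub_ge.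
  by apply: closedI; [exact: closed_sub_le | exact: closed_sub_ge].
have Dco : compact D.
  apply: bounded_closed_compact => //; apply: (@bounded_by _ _ _ 1) => w [w0 w1].
  apply: norm_le_coord => // i.
  rewrite ger0_norm // -w1 (bigD1 i) //= lerDl; exact: sumr_ge0.
have Dne : D !=set0.
  have [a [c [Pa _]]] := H 1 ltr01.
  by have [w [w0 [w1 _]]] := enumP a Pa; exists w.
have [ws wsD wsmin] := EVT_min_rV Dne Dco (continuous_subspaceT (f := F) Fcont).
move: wsD; rewrite in_setE => wsD.
have Fws : F ws <= eps.
  apply/ler_addgt0Pr => d d0.
  have [a [c [Pa [Cc hlt]]]] := H d d0.
  have [w [w0 [w1 aE]]] := enumP a Pa.
  apply: le_trans (wsmin w _) _; first by rewrite in_setE.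
  apply: le_trans (Fle w c Cc) _.
  by rewrite -zsubD /L -aE ltW.
pose v0 := y - L ws.
pose g r := pnorm p (v0 - r).
have gcont : continuous g.
  apply: (lip_cont (K := m%:R)) => r r'.
  apply: le_trans (pn_sub_le hp _ _) _.
  by rewrite zsub2 distrC; exact: pn_le_norm.
pose K := [set r | closure C r /\ g r <= eps + 1].
have Kcl : closed K by apply: closedI; [exact: closed_closure | exact: closed_sub_le].
have Kco : compact K.
  apply: bounded_closed_compact => //.
  apply: (@bounded_by _ _ _ (`|v0| + (eps + 1))) => r [_ gr].
  have -> : r = v0 - (v0 - r) by rewrite opprB addrC subrK.
  apply: le_trans (ler_normB _ _) _; rewrite lerD2l.
  by apply: le_trans (norm_le_pn hp _) _.
have epslt : eps < eps + 1 by rewrite ltrDl.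
have Kne : K !=set0.
  have [z [c Cc <-] zlt] := inf_lt (S0 ws) (le_lt_trans Fws epslt).
  by exists c; split; [exact: subset_closure | exact: ltW].
have [rs rsK rsmin] := EVT_min_rV Kne Kco (continuous_subspaceT (f := g) gcont).
move: rsK; rewrite in_setE => -[rsC grs].
exists (L ws), rs; split.
  exists N, (fun i => ws 0 i), v; split; first by case: wsD.
  by split; [case: wsD | split].
split => //; rewrite zsubD -/v0 -/(g rs).
apply/ler_addgt0Pr => d d0.
have [d1|d1] := leP 1 d; first by apply: le_trans grs _; rewrite lerD2l.
have [z [c Cc <-] zlt] := inf_adherent d0 (hinf ws).
have gc : g c < eps + d by apply: lt_le_trans zlt _; rewrite lerD2r.
apply: le_trans (rsmin c _) _.
  rewrite in_setE; split; first exact: subset_closure.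
  by apply: ltW; apply: lt_trans gc _; rewrite ltrD2l.
exact: ltW.
Qed.

End Attain.


Section Haus.
Variables (R : realType) (k : nat) (p : \bar R).

Lemma haus_le1 (A1 A2 : set 'rV[R]_k) (e d : R) a1 :
  (hausdorff p A1 A2 <= e%:E)%E -> A1 a1 -> 0 < d ->
  exists a2, A2 a2 /\ pnorm p (a1 - a2) < e + d.
Proof.
rewrite /hausdorff ge_max => /andP [H1 _] A1a1 d0.
have : (ereal_inf [set (pnorm p (a1 - a2))%:E | a2 in A2] < (e + d)%:E)%E.
  set S1 := ereal_inf _.
  have h : (S1 <= ereal_sup [set ereal_inf [set (pnorm p (a0 - a2))%:E | a2 in A2] | a0 in A1])%E.
    by apply: ereal_sup_ubound; exists a1.
  apply: le_lt_trans h _; apply: le_lt_trans H1 _.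
  by rewrite lte_fin ltrDl.
move=> /ereal_inf_lt [_ [a2 A2a2 <-]]; rewrite lte_fin => h.
by exists a2.
Qed.

Lemma haus_intro (A1 A2 : set 'rV[R]_k) (e : R) :
  (forall a1, A1 a1 -> exists a2, A2 a2 /\ pnorm p (a1 - a2) <= e) ->
  (forall a2, A2 a2 -> exists a1, A1 a1 /\ pnorm p (a1 - a2) <= e) ->
  (hausdorff p A1 A2 <= e%:E)%E.
Proof.
move=> H1 H2; rewrite /hausdorff ge_max; apply/andP; split;
  apply: ge_ereal_sup => _ [a A1a <-]; apply: ge_ereal_inf.
- by have [a2 [A2a2 h]] := H1 a A1a; exists (pnorm p (a - a2))%:E => //; exists a2.
- by have [a1 [A1a1 h]] := H2 a A1a; exists (pnorm p (a1 - a))%:E => //; exists a1.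
Qed.

End Haus.

Section Prob.
Variables (R : realType) (n m : nat) (p : \bar R).
Variables (C : set 'rV[R]_m) (X : set 'rV[R]_n) (G : 'rV[R]_n -> 'rV[R]_m).
Hypothesis hp : (1 <= p)%E.
Hypothesis hC : convex_cone C.
Hypothesis cX : is_convex X.
Hypothesis cG : C_convex C X G.

Lemma C0 : C 0.
Proof. by case: hC => [[c Cc] [Hs _]]; rewrite -(scale0r c); apply: Hs. Qed.

Lemma Cscale c l : C c -> 0 <= l -> C (l *: c).
Proof. by case: hC => _ [Hs _] Cc l0; apply: Hs. Qed.

Lemma Cadd a b : C a -> C b -> C (a + b).
Proof. by case: hC => _ [_ Ha]; apply: Ha. Qed.

Lemma Csum N (w : 'I_N -> R) (c : 'I_N -> 'rV[R]_m) :
  (forall i, 0 <= w i) -> (forall i, C (c i)) -> C (\sum_i w i *: c i).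
Proof.
move=> w0 Cc; elim/big_ind: _ => //; first exact: C0.
  by move=> a b; apply: Cadd.
by move=> i _; apply: Cscale.
Qed.

Lemma YaP y : Ya C X G y <-> exists x, X x /\ C (y - G x).
Proof.
split.
  move=> [s [Xs [a [b [/= ae [Cb se]]]]] <-]; exists s.1; split => //.
  by rewrite se ae addrAC subrr add0r.
move=> [x [Xx Cy]]; exists (x, y) => //; split => //.
by exists (G x), (y - G x); split => //; split => //=; rewrite addrC subrK.
Qed.

Lemma UI_eq : upper_image C X G = closure (Ya C X G).
Proof.
rewrite /upper_image; congr closure; apply/seteqP; split => y.
  move=> [a [b [[x Xx <-] [Cb ->]]]]; apply/YaP; exists x; split => //.
  by rewrite addrAC subrr add0r.
move=> /YaP [x [Xx Cy]]; exists (G x), (y - G x); split; first by exists x.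
by split => //; rewrite addrC subrK.
Qed.

Lemma Ya_addC y c : Ya C X G y -> C c -> Ya C X G (y + c).
Proof.
move=> /YaP [x [Xx Cy]] Cc; apply/YaP; exists x; split => //.
by rewrite addrAC; apply: Cadd.
Qed.

Lemma Ya_G x : X x -> Ya C X G (G x).
Proof. by move=> Xx; apply/YaP; exists x; rewrite subrr; split => //; exact: C0. Qed.

Lemma Ya_convex : is_convex (Ya C X G).
Proof.
move=> y1 y2 /YaP [x1 [X1 C1]] /YaP [x2 [X2 C2]] l /andP [l0 l1].
apply/YaP; exists (l *: x1 + (1 - l) *: x2); split; first by apply: cX => //; rewrite l0.
have H := cG X1 X2 (l := l); rewrite /leC in H.
have -> : l *: y1 + (1 - l) *: y2 - G (l *: x1 + (1 - l) *: x2) =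
   (l *: (y1 - G x1) + (1 - l) *: (y2 - G x2)) +
   ((l *: G x1 + (1 - l) *: G x2) - G (l *: x1 + (1 - l) *: x2)).
  by apply/rowP => i; rewrite !mxE; ring.
apply: Cadd; last by apply: H; rewrite l0.
by apply: Cadd; apply: Cscale => //; rewrite subr_ge0.
Qed.

Lemma closure_rec r : closure C r -> rec_cone (closure (Ya C X G)) r.
Proof.
move=> clr x clx l l0; apply/closureP => e e0.
have e20 : 0 < e / 2 by rewrite divr_gt0.
have e30 : 0 < e / (2 * (l + 1)) by rewrite divr_gt0 // mulr_gt0 // ltr_wpDl.
have [y [Yy hy]] := (closureP _ _).1 clx _ e20.
have [c [Cc hc]] := (closureP _ _).1 clr _ e30.
exists (y + l *: c); split; first by apply: Ya_addC => //; apply: Cscale.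
have -> : x + l *: r - (y + l *: c) = (x - y) + l *: (r - c).
  by apply/rowP => i; rewrite !mxE; ring.
apply: le_lt_trans (ler_normD _ _) _.
rewrite normrZ ger0_norm //.
have hl : l * (e / (2 * (l + 1))) <= e / 2.
  have -> : l * (e / (2 * (l + 1))) = (l / (l + 1)) * (e / 2).
    by field; rewrite gt_eqF // ltr_wpDl.
  apply: ler_piMl; first exact: ltW.
  by rewrite ler_pdivrMr ?ltr_wpDl // mul1r lerDl.
have : l * `|r - c| <= l * (e / (2 * (l + 1))) by apply: ler_wpM2l => //; exact: ltW.
move=> h2; apply: (@lt_le_trans _ _ (e / 2 + e / 2)); last by rewrite -splitr.
by apply: ltr_leD => //; apply: le_trans h2 hl.
Qed.

End Prob.


Lemma fin_bound (R : realType) k (A : set 'rV[R]_k) : finite_set A ->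
  exists M, 0 <= M /\ forall x, A x -> `|x| <= M.
Proof.
move=> /finite_seqP [s ->]; exists (\sum_(x <- s) `|x|); split.
  by apply: sumr_ge0.
move=> x /=; elim: s => // h s IH; rewrite inE big_cons => /orP [/eqP -> | xs].
  by rewrite lerDl sumr_ge0.
by apply: le_trans (IH xs) _; rewrite lerDr.
Qed.

Section Parts.
Variables (R : realType) (n m : nat) (p : \bar R).
Variables (C : set 'rV[R]_m) (X : set 'rV[R]_n) (G : 'rV[R]_n -> 'rV[R]_m).
Hypothesis hp : (1 <= p)%E.
Hypothesis hC : convex_cone C.
Hypothesis cX : is_convex X.
Hypothesis cG : C_convex C X G.
Hypothesis sC : solid C.
Hypothesis nt : nontrivial C.

Lemma part1 (eps : R) (Xb : set 'rV[R]_n) : 0 < eps ->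
  bounded_CVOP C X G -> hausdorff_infimizer p C X G eps Xb ->
  self_bounded C X G /\ finite_eps_solution p C X G eps [set (x, G x) | x in Xb].
Proof.
move=> e0 [q hq] [[x0 Xb0] [Xbfin [XbX hH]]].
have Yq y : Ya C X G y -> exists b, C b /\ y = q + b.
  move=> Yy; have : upper_image C X G y.
    by rewrite (UI_eq C X G); exact: subset_closure.
  by move=> /hq [a [b [/= -> [Cb ->]]]]; exists b.
split.
  split.
    move=> YT; apply: nt.2; apply/seteqP; split => // w _.
    have [b [Cb e]] : exists b, C b /\ w + q = q + b by apply: Yq; rewrite YT.
    by move: e; rewrite addrC => /addrI ->.
  exists [set q]; split; first exact: finite_set1.
  move=> y Yy; have [b [Cb ->]] := Yq y Yy.
  exists q, b; split; last split => //.
    exists 1%N, (fun _ => 1), (fun _ => q); split => //; split.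
      by rewrite big_ord1.
    by split => //; rewrite big_ord1 scale1r.
  exact: (closure_rec hC (subset_closure Cb)).
split; first by exists (x0, G x0); exists x0.
split; first exact: finite_image.
split.
  move=> _ [x Xbx <-]; split => /=; first exact: XbX.
  by exists (G x), 0; split => //; split; [exact: C0 | rewrite addr0].
move=> y Yy.
have H : forall d, 0 < d -> exists a c, Defs.conv (G @` Xb) a /\ C c /\
    pnorm p (y - (a + c)) < eps + d.
  move=> d d0; have Uy : upper_image C X G y.
    by rewrite (UI_eq C X G); exact: subset_closure.
  have [a2 [[a [c [Pa [Cc ->]]]] h]] := haus_le1 hH Uy d0.
  by exists a, c.
have C0ne : C !=set0 by case: hC.
have [a [r [Pa [clr hb]]]] := attain hp C0ne (finite_image _ Xbfin) H.
exists (a + r), (y - (a + r)); split; last split => //; last by rewrite addrC subrK.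
exists a, r; split.
  apply: conv_mono Pa => _ [x Xbx <-]; exists (x, G x) => //; exists x => //.
split => //; exact: (closure_rec hC clr).
Qed.

Lemma conv_shift (Sb : set ('rV[R]_n * 'rV[R]_m)) a :
  Sb `<=` Sa C X G -> Defs.conv (snd @` Sb) a ->
  exists a' c', Defs.conv (G @` (fst @` Sb)) a' /\ C c' /\ a = a' + c'.
Proof.
move=> SbSa [N [w [v [w0 [w1 [Pv ->]]]]]].
have : forall i, exists s, Sb s /\ s.2 = v i by move=> i; case: (Pv i) => s Sbs <-; exists s.
move=> /choice [f hf].
have Cf i : C (v i - G (f i).1).
  have [Sbf fe] := hf i; have [_ [g [b [/= ge [Cb se]]]]] := SbSa _ Sbf.
  by rewrite -fe se ge addrAC subrr add0r.
exists (\sum_i w i *: G (f i).1), (\sum_i w i *: (v i - G (f i).1)).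
split.
  exists N, w, (fun i => G (f i).1); split => //; split => //; split => // i.
  by exists (f i).1 => //; exists (f i) => //; case: (hf i).
split; first exact: Csum.
by rewrite -big_split; apply: eq_bigr => i _; apply/rowP => j; rewrite !mxE; ring.
Qed.

End Parts.


Section Part2.
Variables (R : realType) (n m : nat) (p : \bar R).
Variables (C : set 'rV[R]_m) (X : set 'rV[R]_n) (G : 'rV[R]_n -> 'rV[R]_m).
Hypothesis hp : (1 <= p)%E.
Hypothesis hC : convex_cone C.
Hypothesis cX : is_convex X.
Hypothesis cG : C_convex C X G.
Hypothesis sC : solid C.

Lemma conv_bound (Q : set 'rV[R]_m) M a : (forall x, Q x -> `|x| <= M) ->
  Defs.conv Q a -> `|a| <= M.
Proof.
move=> HM [N [w [v [w0 [w1 [Qv ->]]]]]].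
apply: le_trans (ler_norm_sum _ _ _) _.
apply: (@le_trans _ _ (\sum_i w i * M)).
  apply: ler_sum => i _; rewrite normrZ ger0_norm //.
  by apply: ler_wpM2l => //; exact: HM.
by rewrite -mulr_suml w1 mul1r.
Qed.

Lemma part2 (eps : R) (Sb : set ('rV[R]_n * 'rV[R]_m)) : 0 < eps ->
  self_bounded C X G ->
  rec_cone (closure (Ya C X G)) = closure C ->
  finite_eps_solution p C X G eps Sb ->
  forall xi : R, eps < xi ->
    bounded_CVOP C X G /\ hausdorff_infimizer p C X G xi (fst @` Sb).
Proof.
move=> e0 _ recE [[s0 Sbs0] [Sbfin [SbSa Hcov]]] xi exi.
have cover y : Ya C X G y -> exists a r b, Defs.conv (snd @` Sb) a /\ closure C r /\
    pnorm p b <= eps /\ y = a + r + b.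
  move=> /Hcov [_ [b [[a [r [Pa [Rr ->]]]] [hb ->]]]].
  by exists a, r, b; rewrite -recE.
split.
  have [c0 /interiorP [rho rho0 Hball]] := sC.
  have [MQ [MQ0 HMQ]] := fin_bound (finite_image snd Sbfin).
  pose M' := 1 + MQ + 1 + eps.
  have M'0 : 0 < M' + 1 by rewrite /M'; lra.
  pose t := (M' + 1) / rho.
  have t0 : 0 < t by rewrite divr_gt0.
  exists (- (t *: c0)) => z; rewrite (UI_eq C X G) => clz.
  have [y [Yy hzy]] := (closureP _ _).1 clz 1 ltr01.
  have [a [r [b [Pa [clr [hb yE]]]]]] := cover y Yy.
  have [c [Cc hrc]] := (closureP _ _).1 clr 1 ltr01.
  exists (- (t *: c0)), (t *: (c0 + t^-1 *: (z - c)) + c); split => //; split; last first.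
    by apply/rowP => j; rewrite !mxE; field; apply: lt0r_neq0; exact: t0.
  apply: (Cadd hC) => //; apply: (Cscale hC); last exact: ltW.
  apply: Hball.
  rewrite opprD addrA subrr add0r normrN normrZ ger0_norm; last by rewrite invr_ge0 ltW.
  have hzc : `|z - c| <= M'.
    have -> : z - c = (z - y) + a + (r - c) + b by rewrite yE; apply/rowP => j; rewrite !mxE; ring.
    apply: le_trans (ler_normD _ _) _.
    apply: lerD; last by apply: le_trans (norm_le_pn hp _) hb.
    apply: le_trans (ler_normD _ _) _.
    apply: lerD; last exact: ltW.
    apply: le_trans (ler_normD _ _) _.
    apply: lerD; first exact: ltW.
    by apply: (conv_bound _ Pa) => x [s Sbs <-]; apply: HMQ; exists s.
  apply: le_lt_trans (ler_wpM2l _ hzc) _; first by rewrite invr_ge0 ltW.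
  rewrite /t invf_div.
  have -> : rho / (M' + 1) * M' = rho * (M' / (M' + 1)) by rewrite mulrAC mulrA.
  rewrite -[X in _ < X]mulr1 ltr_pM2l // ltr_pdivrMr // mul1r; lra.
split; first by exists s0.1; exists s0.
split; first exact: finite_image.
split; first by move=> _ [s Sbs <-]; case: (SbSa _ Sbs).
apply: haus_intro.
- move=> a1; rewrite (UI_eq C X G) => cla1.
  pose d := xi - eps.
  have d0 : 0 < d by rewrite subr_gt0.
  pose e1 := d / (2 * (m%:R + 1)).
  have m1 : 0 < m%:R + 1 :> R by rewrite ltr_wpDl.
  have e10 : 0 < e1 by rewrite divr_gt0 // mulr_gt0.
  have pnb (v : 'rV[R]_m) : `|v| < e1 -> pnorm p v <= d / 2.
    move=> hv; apply: le_trans (pn_le_norm hp _) _.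
    apply: (@le_trans _ _ (m%:R * e1)).
      apply: ler_wpM2l => //; exact: ltW.
    have -> : m%:R * e1 = (m%:R / (m%:R + 1)) * (d / 2) by rewrite /e1; field; rewrite gt_eqF.
    apply: ler_piMl; first by rewrite divr_ge0 // ltW.
    by rewrite ler_pdivrMr // mul1r lerDl.
  have [y [Yy hy]] := (closureP _ _).1 cla1 e1 e10.
  have [a [r [b [Pa [clr [hb yE]]]]]] := cover y Yy.
  have [c [Cc hc]] := (closureP _ _).1 clr e1 e10.
  have [a' [c' [Pa' [Cc' aE]]]] := conv_shift hC SbSa Pa.
  exists (a' + (c' + c)); split.
    by exists a', (c' + c); split => //; split => //; apply: Cadd.
  have -> : a1 - (a' + (c' + c)) = (a1 - y) + b + (r - c).
    by rewrite yE aE; apply/rowP => j; rewrite !mxE; ring.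
  apply: le_trans (pn_triangle hp _ _) _.
  apply: (@le_trans _ _ (d / 2 + eps + d / 2)); last by rewrite /d; lra.
  apply: lerD; last exact: pnb.
  apply: le_trans (pn_triangle hp _ _) _.
  by apply: lerD => //; exact: pnb.
- move=> a2 [a [c [Pa [Cc ->]]]]; exists (a + c); split.
    rewrite (UI_eq C X G); apply: subset_closure; apply: (Ya_addC hC) => //.
    apply: (conv_sub (Ya_convex hC cX cG)); apply: conv_mono Pa.
    move=> _ [x [s Sbs <-] <-]; apply: (@Ya_G R n m C X G hC).
    by case: (SbSa _ Sbs).
  by rewrite subrr pn0 // ltW // (lt_trans e0 exi).
Qed.

End Part2.

Unset Implicit Arguments.
Set Strict Implicit.

Theorem mainTheorem19 (R : realType) (n m : nat) (p : \bar R)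
  (C : set 'rV[R]_m) (X : set 'rV[R]_n) (G : 'rV[R]_n -> 'rV[R]_m) :
  (1 <= p)%E ->
  convex_cone C -> pointed C -> solid C -> nontrivial C ->
  is_convex X -> C_convex C X G ->
  (* (1) *)
  (forall (eps : R) (Xb : set 'rV[R]_n), 0 < eps ->
     bounded_CVOP C X G ->
     hausdorff_infimizer p C X G eps Xb ->
     self_bounded C X G /\
     finite_eps_solution p C X G eps [set (x, G x) | x in Xb]) /\
  (* (2) *)
  (forall (eps : R) (Sb : set ('rV[R]_n * 'rV[R]_m)), 0 < eps ->
     self_bounded C X G ->
     rec_cone (closure (Ya C X G)) = closure C ->
     finite_eps_solution p C X G eps Sb ->
     forall xi : R, eps < xi ->
       bounded_CVOP C X G /\ hausdorff_infimizer p C X G xi (fst @` Sb)).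
Proof.
move=> hp hC _ sC nt cX cG; split.
- move=> eps Xb e0 hb hi.
  exact: (part1 hp hC nt e0 hb hi).
- move=> eps Sb e0 sb recE sol xi exi.
  exact: (part2 hp hC cX cG sC e0 sb recE sol exi).
Qed.
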